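(* Let $J\subseteq S$. The maps $\Pi_\downarrow^J$ and $\Pi_\uparrow^J$ are order-preserving with respect to $\le_S$.
   Context: $\mathfrak{S}_n$ is the symmetric group on $[n]$, $s_i=(i,i+1)$, $S=\{s_1,\dots,s_{n-1}\}$, one-line notation $w=w_1\cdots w_n$, $\mathrm{inv}(w)=\{(i,j):i<j,\ w_i>w_j\}$, weak order $u\le_S v\iff\mathrm{inv}(u)\subseteq\mathrm{inv}(v)$. For $J\subseteq S$, $\mathfrak{S}_n^J$ is the set of $w$ with $w_i<w_{i+1}$ whenever $s_i\in J$. Writing $J=S\setminus\{s_{j_1},\dots,s_{j_r}\}$ with $j_1<\dots<j_r$, the $J$-regions are $\{1,\dots,j_1\},\{j_1+1,\dots,j_2\},\dots,\{j_r+1,\dots,n\}$. $w\in\mathfrak{S}_n^J$ is $(J,231)$-avoiding if there are no indices $i<j<k$ in pairwise different $J$-regions with $w_k<w_i<w_j$ and $w_i=w_k+1$, and $(J,132)$-avoiding if there are no indices $i<j<k$ in pairwise different $J$-regions with $w_i<w_k<w_j$ and $w_k=w_i+1$. For $w\in\mathfrak{S}_n^J$, $\Pi_\downarrow^J(w)$ is the unique greatest $(J,231)$-avoiding element of $\mathfrak{S}_n^J$ that is $\le_S w$, and $\Pi_\uparrow^J(w)$ is the unique least $(J,132)$-avoiding element of $\mathfrak{S}_n^J$ that is $\ge_S w$ (both exist). *)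

(* Defs.v *)
(* Positions and values are 0-based: w : 'S_n, w_i = w i.
   The simple transposition s_{j+1} (1-based) is indexed by j : 'I_n.-1 and
   swaps positions j and j+1 (0-based). *)
From mathcomp Require Import all_boot fingroup perm.
Set Implicit Arguments. Unset Strict Implicit. Unset Printing Implicit Defensive.

Section Defs.
Variable n : nat.
Implicit Types (J : {set 'I_n.-1}) (u v w : 'S_n).

Definition inJ J (p : nat) : bool :=
  [exists j : 'I_n.-1, (j \in J) && (nat_of_ord j == p)].

Definition in_quot J w : bool :=
  [forall i : 'I_n, forall j : 'I_n,
     ((nat_of_ord j == i.+1) && inJ J i) ==> (w i < w j)].

(* index of the J-region containing position p: number of s_{j+1} not in J
   that separate positions before p *)
Definition region J (p : 'I_n) : nat :=
  #|[set j : 'I_n.-1 | (j \notin J) && (nat_of_ord j < p)]|.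

Definition inv w : {set 'I_n * 'I_n} :=
  [set ij : 'I_n * 'I_n | (ij.1 < ij.2) && (w ij.2 < w ij.1)].

Definition weak_le u v : bool := inv u \subset inv v.

Definition pw_diff_regions J (i j k : 'I_n) : bool :=
  [&& region J i != region J j, region J j != region J k
    & region J i != region J k].

Definition avoid231 J w : bool :=
  [forall i : 'I_n, forall j : 'I_n, forall k : 'I_n,
     ~~ [&& i < j, j < k, pw_diff_regions J i j k,
            w k < w i, w i < w j & nat_of_ord (w i) == (w k).+1]].

Definition avoid132 J w : bool :=
  [forall i : 'I_n, forall j : 'I_n, forall k : 'I_n,
     ~~ [&& i < j, j < k, pw_diff_regions J i j k,
            w i < w k, w k < w j & nat_of_ord (w k) == (w i).+1]].

(* Pi_down^J(w): the greatest (J,231)-avoiding element of S_n^J below w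
   (default w if it did not exist; it always exists). *)
Definition Pi_down J w : 'S_n :=
  odflt w [pick x : 'S_n | [&& in_quot J x, avoid231 J x, weak_le x w &
     [forall y : 'S_n,
        [&& in_quot J y, avoid231 J y & weak_le y w] ==> weak_le y x]]].

Definition Pi_up J w : 'S_n :=
  odflt w [pick x : 'S_n | [&& in_quot J x, avoid132 J x, weak_le w x &
     [forall y : 'S_n,
        [&& in_quot J y, avoid132 J y & weak_le w y] ==> weak_le x y]]].

End Defs.

(* Main.v *)
Require Import Defs.
From mathcomp Require Import all_boot fingroup perm.
From mathcomp Require Import zify.

Set Implicit Arguments. Unset Strict Implicit. Unset Printing Implicit Defensive.

Ltac mylia := unfold reverse_coercion in *; lia.

Lemma region_mono n (J : {set 'I_n.-1}) (p q : 'I_n) :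
  p <= q -> region J p <= region J q.
Proof.
move=> h; apply: subset_leq_card; apply/subsetP=> j; rewrite !inE.
by case/andP=> -> H /=; apply: leq_trans H h.
Qed.

Lemma region_lt n (J : {set 'I_n.-1}) (p q : 'I_n) :
  p < q -> region J p != region J q -> region J p < region J q.
Proof. by move=> h ne; rewrite ltn_neqAle ne region_mono // ltnW. Qed.

Lemma region_same n (J : {set 'I_n.-1}) (p q : 'I_n) :
  inJ J p -> nat_of_ord q = p.+1 -> region J q = region J p.
Proof.
move=> HJ Hq; apply: eq_card => j; rewrite !inE Hq ltnS leq_eqVlt.
case: (eqVneq (nat_of_ord j) (nat_of_ord p)) => [Ejp|] //=.
case/existsP: HJ => j0 /andP[j0J /eqP j0p].
have -> : j = j0 by apply: val_inj; rewrite /= Ejp j0p.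
by rewrite j0J.
Qed.

Lemma ivt (f : nat -> bool) c d : c <= d -> f c = false -> f d = true ->
  exists e, [/\ c <= e, e < d, f e = false & f e.+1 = true].
Proof.
elim: d => [|d IH] cd fc fd.
  by move: cd; rewrite leqn0 => /eqP c0; subst; rewrite fc in fd.
move: cd; rewrite leq_eqVlt => /orP[/eqP cE|cd]; first by subst; rewrite fc in fd.
case fdd: (f d).
  have [e [h1 h2 h3 h4]] := IH cd fc fdd.
  by exists e; split => //; apply: leqW.
by exists d.
Qed.

Lemma neq_val n (w : 'S_n) (p i : 'I_n) : p != i -> nat_of_ord (w p) <> nat_of_ord (w i).
Proof. by move=> h E; move: h; rewrite (perm_inj (val_inj E)) eqxx. Qed.

Lemma eq_val n (w : 'S_n) (p i : 'I_n) : nat_of_ord (w p) = w i -> p = i.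
Proof. by move/val_inj/perm_inj. Qed.

Lemma surj n (x : 'S_n) (e : nat) : e < n -> exists q : 'I_n, nat_of_ord (x q) = e.
Proof. by move=> h; exists ((x^-1)%g (Ordinal h)); rewrite permKV. Qed.

Lemma swap_lt n (w : 'S_n) (i k : 'I_n) :
  (nat_of_ord (w i) = (w k).+1 \/ nat_of_ord (w k) = (w i).+1) ->
  forall p q, ~~ ((p == i) && (q == k)) -> ~~ ((p == k) && (q == i)) ->
  ((tperm i k * w)%g p < (tperm i k * w)%g q) = (w p < w q).
Proof.
move=> hw p q h1 h2; rewrite !permM.
case: tpermP => [Ep|Ep|Np1 Np2]; case: tpermP => [Eq|Eq|Nq1 Nq2]; subst;
  rewrite ?eqxx ?andbT ?andbF /= in h1 h2;
  try (have Hp1 := neq_val (w:=w) (introN eqP Np1); have Hp2 := neq_val (w:=w) (introN eqP Np2));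
  try (have Hq1 := neq_val (w:=w) (introN eqP Nq1); have Hq2 := neq_val (w:=w) (introN eqP Nq2));
  try (move/eqP: h1 => h1; subst); try (move/eqP: h2 => h2; subst);
  try (apply/idP/idP; lia); clear h1 h2; unfold reverse_coercion in *; apply/idP/idP; lia.
Qed.

Lemma inv_sub n (x w : 'S_n) (p q : 'I_n) :
  weak_le x w -> p < q -> x q < x p -> w q < w p.
Proof.
move=> hle pq h; have := subsetP hle (p, q); rewrite !inE /= pq h /=.
by move=> /(_ isT).
Qed.

Lemma key231 n (J : {set 'I_n.-1}) (w x : 'S_n) (i j k : 'I_n) :
  i < j -> j < k -> pw_diff_regions J i j k -> w i < w j ->
  nat_of_ord (w i) = (w k).+1 ->
  avoid231 J x -> weak_le x w -> x i < x k.
Proof.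
move=> ij jk hreg wij wik hav hle.
case: (ltngtP (x i) (x k)) => // [hki|/eq_val Eik]; last first.
  by move: (ltn_trans ij jk); rewrite Eik ltnn.
exfalso.
have xij : x i < x j.
  case: (ltngtP (x i) (x j)) => // [h|/eq_val Eij].
    by have := inv_sub hle ij h; mylia.
  by move: ij; rewrite Eij ltnn.
have between : forall m : 'I_n, i < m -> m < k -> x k < x m -> x m < x i -> False.
  move=> m im mk h1 h2.
  have := inv_sub hle im h2; have := inv_sub hle mk h1; mylia.
case/and3P: hreg => r1 r2 r3.
have rij := region_lt ij r1; have rjk := region_lt jk r2.
pose f e := [exists p : 'I_n, (nat_of_ord (x p) == e) && (p < j)].
have fc : f (x k) = false.
  apply/negbTE/existsP => [[p /andP[/eqP /eq_val Epk pj]]].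
  by subst; move: (ltn_trans pj jk); rewrite ltnn.
have fd : f (x i) = true by apply/existsP; exists i; rewrite eqxx ij.
have [e [ce ed fe fe1]] := ivt (ltnW hki) fc fd.
case/existsP: fe1 => p /andP[/eqP xp pj].
have [q xq] : exists q : 'I_n, nat_of_ord (x q) = e.
  by apply: surj; apply: (ltn_trans ed); apply: ltn_ord.
have jq : j < q.
  case: (ltngtP j q) => // [qj|Ejq].
    have : f e by apply/existsP; exists q; rewrite xq eqxx qj.
    by rewrite fe.
  by move: xij ed; rewrite (val_inj Ejq) => *; mylia.
have pi : p <= i.
  case: (leqP p i) => // ip.
  case: (eqVneq (nat_of_ord (x p)) (x i)) => [/eq_val Epi|Npi].
    by subst; rewrite ltnn in ip.
  exfalso; apply: (between p ip (ltn_trans pj jk)); mylia.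
have kq : k <= q.
  case: (leqP k q) => // qk.
  case: (eqVneq (nat_of_ord (x q)) (x k)) => [/eq_val Eqk|Nqk].
    by subst; rewrite ltnn in qk.
  exfalso; apply: (between q (ltn_trans ij jq) qk); mylia.
have rpi := region_mono J pi; have rkq := region_mono J kq.
move/forallP: hav => /(_ p) /forallP /(_ j) /forallP /(_ q).
rewrite pj jq /= /pw_diff_regions.
have -> : region J p != region J j by apply/eqP; mylia.
have -> : region J j != region J q by apply/eqP; mylia.
have -> : region J p != region J q by apply/eqP; mylia.
rewrite /=; move/negP; apply; apply/and3P; split; try (apply/eqP); mylia.
Qed.

Lemma inv_sup n (x w : 'S_n) (p q : 'I_n) :
  weak_le w x -> p < q -> w q < w p -> x q < x p.
Proof.
move=> hle pq h; have := subsetP hle (p, q); rewrite !inE /= pq h /=.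
by move=> /(_ isT).
Qed.

Lemma key132 n (J : {set 'I_n.-1}) (w x : 'S_n) (i j k : 'I_n) :
  i < j -> j < k -> pw_diff_regions J i j k -> w k < w j ->
  nat_of_ord (w k) = (w i).+1 ->
  avoid132 J x -> weak_le w x -> x k < x i.
Proof.
move=> ij jk hreg wkj wik hav hle.
case: (ltngtP (x i) (x k)) => // [hki|/eq_val Eik]; last first.
  by move: (ltn_trans ij jk); rewrite Eik ltnn.
exfalso.
have xkj : x k < x j := inv_sup hle jk wkj.
have between : forall m : 'I_n, i < m -> m < k -> x i < x m -> x m < x k -> False.
  move=> m im mk h1 h2.
  case: (ltngtP (w m) (w i)) => [h|h|/eq_val Emi].
  - by have := inv_sup hle im h; mylia.
  - case: (eqVneq (nat_of_ord (w m)) (w k)) => [/eq_val Emk|Nmk].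
      by subst; rewrite ltnn in mk.
    have h' : w k < w m by mylia.
    by have := inv_sup hle mk h'; mylia.
  - by subst; rewrite ltnn in im.
case/and3P: hreg => r1 r2 r3.
have rij := region_lt ij r1; have rjk := region_lt jk r2.
pose f e := ~~ [exists p : 'I_n, (nat_of_ord (x p) == e) && (p < j)].
have fc : f (x i) = false.
  by rewrite /f; apply: negbF; apply/existsP; exists i; rewrite eqxx ij.
have fd : f (x k) = true.
  rewrite /f /=; apply/negP => /existsP [p /andP[/eqP /eq_val Epk pj]].
  by subst; move: (ltn_trans pj jk); rewrite ltnn.
have [e [ce ed fe fe1]] := ivt (ltnW hki) fc fd.
move/negbFE: fe => /existsP [p /andP[/eqP xp pj]].
have [q xq] : exists q : 'I_n, nat_of_ord (x q) = e.+1.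
  by apply: surj; exact: (leq_ltn_trans ed (ltn_ord _)).
have jq : j < q.
  case: (ltngtP j q) => // [qj|Ejq].
    have : ~~ f e.+1 by apply/negPn/existsP; exists q; rewrite xq eqxx qj.
    by rewrite fe1.
  by move: xkj ed; rewrite (val_inj Ejq) => *; mylia.
have pi : p <= i.
  case: (leqP p i) => // ip.
  case: (eqVneq (nat_of_ord (x p)) (x i)) => [/eq_val Epi|Npi].
    by subst; rewrite ltnn in ip.
  exfalso; apply: (between p ip (ltn_trans pj jk)); mylia.
have kq : k <= q.
  case: (leqP k q) => // qk.
  case: (eqVneq (nat_of_ord (x q)) (x k)) => [/eq_val Eqk|Nqk].
    by subst; rewrite ltnn in qk.
  exfalso; apply: (between q (ltn_trans ij jq) qk); mylia.
have rpi := region_mono J pi; have rkq := region_mono J kq.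
move/forallP: hav => /(_ p) /forallP /(_ j) /forallP /(_ q).
rewrite pj jq /= /pw_diff_regions.
have -> : region J p != region J j by apply/eqP; mylia.
have -> : region J j != region J q by apply/eqP; mylia.
have -> : region J p != region J q by apply/eqP; mylia.
rewrite /=; move/negP; apply; apply/and3P; split; try (apply/eqP); mylia.
Qed.

Lemma inv_down n (w : 'S_n) (i k : 'I_n) :
  i < k -> nat_of_ord (w i) = (w k).+1 ->
  Defs.inv (tperm i k * w)%g = Defs.inv w :\ (i, k).
Proof.
move=> ik hw; apply/setP => [[p q]]; rewrite !inE /= xpair_eqE.
have [/andP[/eqP-> /eqP->]|H1] := boolP ((p == i) && (q == k)).
  rewrite !permM tpermL tpermR ik /=; apply/negbTE; mylia.
have [/andP[/eqP-> /eqP->]|H2] := boolP ((p == k) && (q == i)).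
  by rewrite ltnNge (ltnW ik) /= ?andbF.
rewrite /= (swap_lt (or_introl hw)) //.
- by rewrite andbC.
- by rewrite andbC.
Qed.

Lemma inv_up n (w : 'S_n) (i k : 'I_n) :
  i < k -> nat_of_ord (w k) = (w i).+1 ->
  Defs.inv (tperm i k * w)%g = (i, k) |: Defs.inv w.
Proof.
move=> ik hw; apply/setP => [[p q]]; rewrite !inE /= xpair_eqE.
have [/andP[/eqP-> /eqP->]|H1] := boolP ((p == i) && (q == k)).
  rewrite !permM tpermL tpermR ik /=; mylia.
have [/andP[/eqP-> /eqP->]|H2] := boolP ((p == k) && (q == i)).
  by rewrite ltnNge (ltnW ik) /= ?andbF.
rewrite ?(negbTE H1) /= (swap_lt (or_intror hw)) //.
- by rewrite andbC.
- by rewrite andbC.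
Qed.

Lemma quot_swap n (J : {set 'I_n.-1}) (w : 'S_n) (i k : 'I_n) :
  i < k -> region J i != region J k ->
  (nat_of_ord (w i) = (w k).+1 \/ nat_of_ord (w k) = (w i).+1) ->
  in_quot J w -> in_quot J (tperm i k * w)%g.
Proof.
move=> ik rik hw hq; apply/forallP => p; apply/forallP => q; apply/implyP.
case/andP => /eqP hpq hJ.
have := implyP (forallP (forallP hq p) q); rewrite hpq eqxx hJ => /(_ isT).
rewrite (swap_lt hw) //.
  apply/negP => /andP[/eqP Epi /eqP Eqk]; subst.
  by move: rik; rewrite (region_same hJ hpq) eqxx.
apply/negP => /andP[/eqP Epk /eqP Eqi]; subst; mylia.
Qed.

Lemma exists_down n (J : {set 'I_n.-1}) (w : 'S_n) : in_quot J w -> exists x : 'S_n,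
  [&& in_quot J x, avoid231 J x, weak_le x w &
     [forall y : 'S_n, [&& in_quot J y, avoid231 J y & weak_le y w] ==> weak_le y x]].
Proof.
move: w; suff H : forall N (w : 'S_n), #|Defs.inv w| = N -> in_quot J w -> exists x : 'S_n,
  [&& in_quot J x, avoid231 J x, weak_le x w &
     [forall y : 'S_n, [&& in_quot J y, avoid231 J y & weak_le y w] ==> weak_le y x]].
  by move=> w; exact: H _ w erefl.
elim/ltn_ind => N IH w hN hq.
case: (boolP (avoid231 J w)) => hav.
  exists w; rewrite hq hav /weak_le subxx /=; apply/forallP => y; apply/implyP.
  by case/and3P.
move/forallPn: hav => [i /forallPn [j /forallPn [k /negbNE]]].
case/andP=> ij /andP[jk /andP[hreg /andP[wki /andP[wij /eqP wik]]]].
have ik := ltn_trans ij jk.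
have r3 : region J i != region J k by case/and3P: hreg.
have hinv : Defs.inv (tperm i k * w)%g = Defs.inv w :\ (i,k) := inv_down ik wik.
have hin : (i,k) \in Defs.inv w by rewrite inE /= ik wki.
have hlt : #|Defs.inv (tperm i k * w)%g| < N.
  by rewrite -hN hinv (cardsD1 (i,k) (Defs.inv w)) hin.
have hq' := quot_swap ik r3 (or_introl wik) hq.
have [x /and4P[xq xa xle xmax]] := IH _ hlt _ erefl hq'.
exists x; rewrite xq xa /=; apply/andP; split.
  by apply: subset_trans xle _; rewrite hinv subsetDl.
apply/forallP => y; apply/implyP => /and3P[yq ya yle].
apply: (implyP (forallP xmax y)); rewrite yq ya /= /weak_le hinv.
apply/subsetP => pq hpq; rewrite in_setD1 (subsetP yle _ hpq) andbT.
apply/eqP => E; subst pq; move: hpq; rewrite inE /= ik /=.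
have := key231 ij jk hreg wij wik ya yle; mylia.
Qed.

Lemma exists_up n (J : {set 'I_n.-1}) (w : 'S_n) : in_quot J w -> exists x : 'S_n,
  [&& in_quot J x, avoid132 J x, weak_le w x &
     [forall y : 'S_n, [&& in_quot J y, avoid132 J y & weak_le w y] ==> weak_le x y]].
Proof.
move: w; suff H : forall N (w : 'S_n), #|~: Defs.inv w| = N -> in_quot J w -> exists x : 'S_n,
  [&& in_quot J x, avoid132 J x, weak_le w x &
     [forall y : 'S_n, [&& in_quot J y, avoid132 J y & weak_le w y] ==> weak_le x y]].
  by move=> w; exact: H _ w erefl.
elim/ltn_ind => N IH w hN hq.
case: (boolP (avoid132 J w)) => hav.
  exists w; rewrite hq hav /weak_le subxx /=; apply/forallP => y; apply/implyP.
  by case/and3P.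
move/forallPn: hav => [i /forallPn [j /forallPn [k /negbNE]]].
case/andP=> ij /andP[jk /andP[hreg /andP[wik0 /andP[wkj /eqP wik]]]].
have ik := ltn_trans ij jk.
have r3 : region J i != region J k by case/and3P: hreg.
have hinv : Defs.inv (tperm i k * w)%g = (i,k) |: Defs.inv w := inv_up ik wik.
have hin : (i,k) \notin Defs.inv w by rewrite inE /= ik /= -leqNgt ltnW.
have hlt : #|~: Defs.inv (tperm i k * w)%g| < N.
  have := cardsC (Defs.inv w); have := cardsC (Defs.inv (tperm i k * w)%g).
  rewrite hinv cardsU1 hin; mylia.
have hq' := quot_swap ik r3 (or_intror wik) hq.
have [x /and4P[xq xa xle xmax]] := IH _ hlt _ erefl hq'.
exists x; rewrite xq xa /=; apply/andP; split.
  by apply: subset_trans _ xle; rewrite hinv subsetUr.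
apply/forallP => y; apply/implyP => /and3P[yq ya yle].
apply: (implyP (forallP xmax y)); rewrite yq ya /= /weak_le hinv.
rewrite subUset sub1set; move: (yle); rewrite /weak_le => ->; rewrite andbT inE /= ik /=.
exact: key132 ij jk hreg wkj wik ya yle.
Qed.

Lemma Pi_downP n (J : {set 'I_n.-1}) (w : 'S_n) : in_quot J w ->
  [&& in_quot J (Pi_down J w), avoid231 J (Pi_down J w), weak_le (Pi_down J w) w &
     [forall y : 'S_n, [&& in_quot J y, avoid231 J y & weak_le y w] ==> weak_le y (Pi_down J w)]].
Proof.
move=> hq; rewrite /Pi_down; case: pickP => [x Hx|H0] //=.
have [x Hx] := exists_down hq; by move: (H0 x); rewrite /= Hx.
Qed.

Lemma Pi_upP n (J : {set 'I_n.-1}) (w : 'S_n) : in_quot J w ->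
  [&& in_quot J (Pi_up J w), avoid132 J (Pi_up J w), weak_le w (Pi_up J w) &
     [forall y : 'S_n, [&& in_quot J y, avoid132 J y & weak_le w y] ==> weak_le (Pi_up J w) y]].
Proof.
move=> hq; rewrite /Pi_up; case: pickP => [x Hx|H0] //=.
have [x Hx] := exists_up hq; by move: (H0 x); rewrite /= Hx.
Qed.

Theorem lemma3p15 (n : nat) (J : {set 'I_n.-1}) (u v : 'S_n) :
  in_quot J u -> in_quot J v -> weak_le u v ->
  weak_le (Pi_down J u) (Pi_down J v) /\ weak_le (Pi_up J u) (Pi_up J v).
Proof.
move=> hu hv huv.
have /and4P[du1 du2 du3 du4] := Pi_downP hu.
have /and4P[dv1 dv2 dv3 dv4] := Pi_downP hv.
have /and4P[uu1 uu2 uu3 uu4] := Pi_upP hu.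
have /and4P[uv1 uv2 uv3 uv4] := Pi_upP hv.
split.
  apply: (implyP (forallP dv4 _)); rewrite du1 du2 /=; exact: subset_trans du3 huv.
apply: (implyP (forallP uu4 _)); rewrite uv1 uv2 /=; exact: subset_trans huv uv3.
Qed.
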